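(* Let $G$ be a finite simple graph of order $n$ with minimum degree $\delta$. If $\delta\geq 1$ and $\sigma_2(G)\geq \frac{n}{\delta}+\delta-1$, then $\pi_2(G)\geq n-\delta$. Furthermore, if $\pi_2(G)\geq n-\delta$, then $\sigma^*(G)\geq n$.
   Context: $\sigma_2(G)=\min\{d_G(u)+d_G(v): u\neq v,\ uv\notin E(G)\}$ and $\pi_2(G)=\min\{d_G(u)d_G(v): u\neq v,\ uv\notin E(G)\}$, both defined to be $+\infty$ if $G$ is complete. For an independent set $I$ of $G$, $\delta_G(I)=\min\{d_G(u):u\in I\}$, $w_G(I)=\sum_{u\in I}d_G(u)$; $I$ is large if $|I|\ge\delta_G(I)+1$. $\sigma^*(G)=\min\{w_G(I): I \text{ a large independent set of } G\}$, or $+\infty$ if there is no large independent set. *)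

(* Defs.v *)
From mathcomp Require Import all_boot all_order all_algebra.
Set Implicit Arguments. Unset Strict Implicit. Unset Printing Implicit Defensive.
Import Order.TTheory GRing.Theory Num.Theory.

Section Graph.
Variables (T : finType) (e : rel T).

Definition simple_graph : Prop := symmetric e /\ irreflexive e.

Definition deg (u : T) : nat := #|[set v | e u v]|.

Definition is_min_degree (delta : nat) : Prop :=
  (exists u, deg u = delta) /\ (forall u, delta <= deg u).

Definition independent (I : {set T}) : bool :=
  [forall u in I, forall v in I, ~~ e u v].

(* delta_G(I) = min_{u in I} d_G(u); I is large iff |I| >= delta_G(I) + 1,
   i.e. iff some u in I has d_G(u) + 1 <= |I| (min over nonempty I). *)
Definition large (I : {set T}) : bool :=
  [exists u in I, deg u + 1 <= #|I|].

Definition weight (I : {set T}) : nat := \sum_(u in I) deg u.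

(* sigma_2(G) >= b   (b rational); vacuous if G complete (sigma_2 = +oo) *)
Definition sigma2_ge (b : rat) : Prop :=
  forall u v, u != v -> ~~ e u v -> (b <= ((deg u + deg v)%:R : rat))%R.

Definition pi2_ge (b : int) : Prop :=
  forall u v, u != v -> ~~ e u v -> (b <= ((deg u * deg v)%:Z : int))%R.

Definition sigma_star_ge (b : nat) : Prop :=
  forall I : {set T}, independent I -> large I -> b <= weight I.

End Graph.

(* Main.v *)
Require Import Defs.
From mathcomp Require Import all_boot all_order all_algebra.
From mathcomp Require Import zify ring lra.
Import Order.TTheory GRing.Theory Num.Theory.
Local Open Scope ring_scope.

Lemma part1 (T : finType) (e : rel T) (delta : nat) :
  (forall u, (delta <= deg e u)%N) -> (1 <= delta)%N ->
  (sigma2_ge e ((#|T|%:R : rat) / (delta%:R) + (delta%:R) - 1) ->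
     pi2_ge e ((#|T|%:Z) - (delta%:Z))).
Proof.
move=> hmin hd hs u v huv nuv.
  have H := hs u v huv nuv.
  have hu := hmin u; have hv := hmin v.
  set a := deg e u in H hu *; set b := deg e v in H hv *.
  set n := #|T| in H *.
  have dpos : (0 < (delta%:R : rat)) by rewrite ltr0n.
  have H2 : ((n%:R : rat) + (delta%:R)^+2 - delta%:R <= delta%:R * (a + b)%:R).
    have -> : (n%:R : rat) + (delta%:R)^+2 - delta%:R
       = delta%:R * (n%:R / delta%:R + delta%:R - 1).
      by field; rewrite gt_eqF.
    by rewrite ler_pM2l.
  have H3 : (n + delta * delta <= delta * (a + b) + delta)%N.
    rewrite -(ler_nat rat) !natrD !natrM; rewrite natrD in H2.
    by move: H2; rewrite expr2 => H2; lra.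
  have H4 : (n <= a * b + delta)%N by nia.
  lia.
Qed.

Lemma part2 (T : finType) (e : rel T) (delta : nat) :
  (forall u, (delta <= deg e u)%N) -> (1 <= delta)%N ->
  (pi2_ge e ((#|T|%:Z) - (delta%:Z)) -> sigma_star_ge e #|T|).
Proof.
move=> hmin hd hp I hI /existsP [u /andP [uI hu]].
have hk := hmin u; set k := deg e u in hu hk *.
set n := #|T|.
have kpos : (0 < k)%N by exact: leq_trans hd hk.
have hv : forall v, v \in I :\ u -> (n - delta <= k * deg e v)%N.
  move=> v; rewrite in_setD1 => /andP [vu vI].
  have := hp u v; rewrite eq_sym vu => /(_ isT).
  have : ~~ e u v by move/forallP: hI => /(_ u); rewrite uI /= => /forallP /(_ v); rewrite vI.
  move=> nuv /(_ nuv) => h.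
  lia.
have cI : (k <= #|I :\ u|)%N.
  by move: hu; rewrite (cardsD1 u I) uI; lia.
have S1 : (k * (n - delta) <= k * \sum_(v in I :\ u) deg e v)%N.
  rewrite big_distrr /=.
  have L : (\sum_(v in I :\ u) (n - delta) <= \sum_(v in I :\ u) k * deg e v)%N.
    by apply: leq_sum => v vI; apply: hv.
  apply: leq_trans L.
  rewrite sum_nat_const; exact: (leq_mul cI (leqnn _)).
rewrite leq_pmul2l // in S1.
rewrite /weight (bigD1 u uI) /=.
have -> : (\sum_(i in I | i != u) deg e i = \sum_(v in I :\ u) deg e v)%N.
  by apply: eq_bigl => v; rewrite in_setD1 andbC.
move: S1 hk; generalize (\sum_(v in I :\ u) deg e v) => s S1 hk.
rewrite -/k.
lia.

Qed.

Theorem proposition1p6 (T : finType) (e : rel T) (delta : nat) :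
  simple_graph e -> is_min_degree e delta -> (1 <= delta)%N ->
  (sigma2_ge e ((#|T|%:R : rat) / (delta%:R) + (delta%:R) - 1) ->
     pi2_ge e ((#|T|%:Z) - (delta%:Z)))
  /\
  (pi2_ge e ((#|T|%:Z) - (delta%:Z)) -> sigma_star_ge e #|T|).
Proof.
move=> _ [_ hmin] hd; split; [exact: part1 | exact: part2].
Qed.
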